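(* Let $\mathscr H$ and $\mathscr F$ be RKHSs on sets $\mathcal X$ and $\mathcal Y$ with feature maps $\phi$ and $\psi$, let $\Phi=[\phi(x_1),\dots,\phi(x_m)]$ and $\Psi=[\psi(y_1),\dots,\psi(y_n)]$ each consist of linearly independent elements, let $B\in\mathbb R^{n\times m}$, and let $S=\Psi B\Phi^\top\colon\mathscr H\to\mathscr F$. Let $G_\Phi=\Phi^\top\Phi$, $G_\Psi=\Psi^\top\Psi$ and $M=B^\top G_\Psi B\in\mathbb R^{m\times m}$. Assume that each singular value of $S$ has multiplicity $1$. Let $\lambda_1,\dots,\lambda_r$ be the nonzero eigenvalues of $MG_\Phi\in\mathbb R^{m\times m}$, counted with multiplicities, with corresponding eigenvectors $\mathbf w_1,\dots,\mathbf w_r\in\mathbb R^m$, and set $$v_i=(\mathbf w_i^\top G_\Phi\mathbf w_i)^{-1/2}\,\Phi\mathbf w_i,\qquad u_i=\lambda_i^{-1/2}Sv_i.$$ Then the singular value decomposition of $S$ is $$S=\sum_{i=1}^r\lambda_i^{1/2}\,(u_i\otimes v_i).$$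
   Context: An RKHS $\mathscr H$ on $\mathcal X$ with kernel $k$ has feature map $\phi(x)=k(x,\cdot)$ (similarly $\mathscr F$ with kernel $l$, feature map $\psi$). Feature matrices are row vectors: $\Phi\mathbf a=\sum_j a_j\phi(x_j)$ for $\mathbf a\in\mathbb R^m$; $\Phi^\top v=(\langle\phi(x_j),v\rangle_{\mathscr H})_j$ for $v\in\mathscr H$; $G_\Phi=(k(x_i,x_j))_{ij}$ and $G_\Psi=(l(y_i,y_j))_{ij}$ are the Gram matrices. Thus $Sv=\sum_i\psi(y_i)\sum_jb_{ij}\langle\phi(x_j),v\rangle$. The tensor product operator is $(y\otimes x)h=\langle x,h\rangle y$; a singular value decomposition $\sum_i\sigma_i(u_i\otimes v_i)$ has orthonormal systems $\{u_i\}\subseteq\mathscr F$, $\{v_i\}\subseteq\mathscr H$ and $\sigma_i>0$. *)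

(* Defs.v *)
From HB Require Import structures.
From mathcomp Require Import all_boot all_order all_algebra.
From mathcomp Require Import reals.
Set Implicit Arguments. Unset Strict Implicit. Unset Printing Implicit Defensive.
Import Order.TTheory GRing.Theory Num.Theory.
Local Open Scope ring_scope.

Section RKHSDefs.
Variable R : realType.

Definition inner_product (V : lmodType R) (ip : V -> V -> R) : Prop :=
  [/\ forall u v, ip u v = ip v u,
      forall (a : R) u v w, ip (a *: u + v) w = a * ip u w + ip v w,
      forall u, 0 <= ip u u &
      forall u, ip u u = 0 -> u = 0].

(* completeness w.r.t. the norm ||u|| = sqrt (ip u u) (we compare ||.||^2 with e) *)
Definition ip_complete (V : lmodType R) (ip : V -> V -> R) : Prop :=
  forall u : nat -> V,
    (forall e : R, 0 < e -> exists N, forall n p, (N <= n)%N -> (N <= p)%N ->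
        ip (u n - u p) (u n - u p) < e) ->
    exists l : V, forall e : R, 0 < e -> exists N, forall n, (N <= n)%N ->
        ip (u n - l) (u n - l) < e.

(* V with ip is an RKHS on X with feature map phi (phi x = k(x,.)):
   V is a Hilbert space, and h |-> (x |-> <h, phi x>) identifies V with a
   space of functions on X whose point evaluations are represented by phi. *)
Definition RKHS (X : Type) (V : lmodType R) (ip : V -> V -> R) (phi : X -> V) : Prop :=
  [/\ inner_product ip, ip_complete ip &
      forall h, (forall x, ip h (phi x) = 0) -> h = 0].

Definition gram (X : Type) (V : lmodType R) (ip : V -> V -> R) (phi : X -> V)
  (m : nat) (xs : 'I_m -> X) : 'M[R]_m :=
  \matrix_(i, j) ip (phi (xs i)) (phi (xs j)).

(* Phi a = sum_j a_j phi(x_j) *)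
Definition featmul (X : Type) (V : lmodType R) (phi : X -> V)
  (m : nat) (xs : 'I_m -> X) (a : 'cV[R]_m) : V :=
  \sum_(j < m) a j 0 *: phi (xs j).

(* Phi^T v = (<phi(x_j), v>)_j *)
Definition featT (X : Type) (V : lmodType R) (ip : V -> V -> R) (phi : X -> V)
  (m : nat) (xs : 'I_m -> X) (v : V) : 'cV[R]_m :=
  \col_(j < m) ip (phi (xs j)) v.

Definition lin_indep (X : Type) (V : lmodType R) (phi : X -> V)
  (m : nat) (xs : 'I_m -> X) : Prop :=
  forall a : 'cV[R]_m, featmul phi xs a = 0 -> a = 0.

Definition tensor (V W : lmodType R) (ipV : V -> V -> R) (y : W) (x : V) : V -> W :=
  fun h => ipV x h *: y.

Definition Sop (X Y : Type) (V W : lmodType R) (ipV : V -> V -> R)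
  (phi : X -> V) (psi : Y -> W) (m n : nat) (xs : 'I_m -> X) (ys : 'I_n -> Y)
  (B : 'M[R]_(n, m)) : V -> W :=
  fun v => featmul psi ys (B *m featT ipV phi xs v).

(* v is an eigenvector of S^* S for mu, written through the defining property
   of the adjoint: <S^*S v, h> = <S v, S h> = mu <v, h> for all h. *)
Definition eigen_SstarS (V W : lmodType R) (ipV : V -> V -> R) (ipW : W -> W -> R)
  (S : V -> W) (mu : R) (v : V) : Prop :=
  forall h, ipW (S v) (S h) = mu * ipV v h.

(* every singular value sigma > 0 of S (i.e. sigma^2 eigenvalue of S^*S)
   has multiplicity one: the eigenspace of S^*S for sigma^2 is at most 1-dim. *)
Definition simple_singular_values (V W : lmodType R) (ipV : V -> V -> R)
  (ipW : W -> W -> R) (S : V -> W) : Prop :=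
  forall sigma : R, 0 < sigma -> forall v1 v2,
    eigen_SstarS ipV ipW S (sigma ^+ 2) v1 ->
    eigen_SstarS ipV ipW S (sigma ^+ 2) v2 ->
    v1 != 0 -> exists c : R, v2 = c *: v1.

Definition orthonormal (V : lmodType R) (ip : V -> V -> R) (r : nat) (e : 'I_r -> V) : Prop :=
  forall i j, ip (e i) (e j) = (i == j)%:R.

Definition is_SVD (V W : lmodType R) (ipV : V -> V -> R) (ipW : W -> W -> R)
  (S : V -> W) (r : nat) (sigma : 'I_r -> R) (u : 'I_r -> W) (v : 'I_r -> V) : Prop :=
  [/\ forall i, 0 < sigma i, orthonormal ipW u, orthonormal ipV v &
      forall h, S h = \sum_(i < r) sigma i *: tensor ipV (u i) (v i) h].

End RKHSDefs.

(* Main.v *)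
Require Import Defs.
From HB Require Import structures.
From mathcomp Require Import all_boot all_order all_algebra.
From mathcomp Require Import reals.
From mathcomp Require Import ring.
Import Order.TTheory GRing.Theory Num.Theory.
Local Open Scope ring_scope.
Set Implicit Arguments. Unset Strict Implicit. Unset Printing Implicit Defensive.

Section Core.
Variable R : realType.

Lemma PD_mx0 m (G : 'M[R]_m) :
  (forall x : 'cV_m, x != 0 -> 0 < (x^T *m G *m x) 0 0) ->
  forall p (Y : 'M_(m, p)), Y^T *m G *m Y = 0 -> Y = 0.
Proof.
move=> PD p Y HY; apply/matrixP => i j; rewrite mxE.
have : col j Y = 0.
  apply/eqP; apply: contraT => /PD.
  have -> : ((col j Y)^T *m G *m col j Y) = (delta_mx j 0)^T *m (Y^T *m G *m Y) *m delta_mx j 0.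
    by rewrite colE trmx_mul !mulmxA.
  by rewrite HY mulmx0 mul0mx mxE ltxx.
by move/matrixP/(_ i 0); rewrite !mxE.
Qed.

Lemma PD_unit m (G : 'M[R]_m) : G^T = G ->
  (forall x : 'cV_m, x != 0 -> 0 < (x^T *m G *m x) 0 0) -> G \in unitmx.
Proof.
move=> Gs PD; rewrite -row_free_unit -kermx_eq0; apply/rowV0P => v /sub_kermxP vG.
have : v^T = 0.
  apply: (PD_mx0 PD); rewrite trmxK -mulmxA.
  have -> : G *m v^T = 0 by rewrite -Gs -trmx_mul vG trmx0.
  by rewrite mulmx0.
by move/(congr1 trmx); rewrite trmxK trmx0.
Qed.
End Core.


Section Core2.
Variable R : realType.
Variable n : nat.
Variables (G A : 'M[R]_n.+1).
Hypothesis Gs : G^T = G.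
Hypothesis PD : forall x : 'cV_n.+1, x != 0 -> 0 < (x^T *m G *m x) 0 0.
Hypothesis SA : G *m A = A^T *m G.

Lemma horner_XsubC (x : R) : horner_mx A ('X - x%:P) = A - x%:M.
Proof. by rewrite rmorphB /= horner_mx_X horner_mx_C. Qed.

Lemma SA_sq (mu : R) (F : 'M_n.+1) :
  (A - mu%:M) *m ((A - mu%:M) *m F) = 0 -> (A - mu%:M) *m F = 0.
Proof.
move=> H; apply: (PD_mx0 PD).
have NG : (A - mu%:M)^T *m G = G *m (A - mu%:M).
  by rewrite linearB /= tr_scalar_mx mulmxBl mulmxBr -SA mul_scalar_mx mul_mx_scalar.
rewrite trmx_mul -!mulmxA (mulmxA _ G) NG -!mulmxA H.
by rewrite !mulmx0.
Qed.

Lemma radical (s : seq R) (g : {poly R}) :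
  horner_mx A (g * \prod_(x <- s) ('X - x%:P)) = 0 ->
  horner_mx A (g * \prod_(x <- undup s) ('X - x%:P)) = 0.
Proof.
elim: s g => [|x s IH] g //=.
case: ifP => xs H.
  apply: IH.
  move: H; rewrite big_cons (perm_big _ (perm_to_rem xs)) big_cons /=.
  set P := \prod_(_ <- _) _.
  have -> : g * (('X - x%:P) * (('X - x%:P) * P)) = ('X - x%:P) * (('X - x%:P) * (g * P)).
    by rewrite mulrCA; congr (_ * _); rewrite mulrCA.
  rewrite !rmorphM /= horner_XsubC -!mulmxE => /SA_sq.
  have Hc : horner_mx A g *m (A - x%:M) = (A - x%:M) *m horner_mx A g.
    by rewrite -horner_XsubC !mulmxE -!rmorphM mulrC.
  by move=> HH; rewrite mulmxA Hc -mulmxA.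
rewrite big_cons mulrA; apply: IH.
by move: H; rewrite big_cons mulrA.
Qed.
End Core2.


Lemma count_enumT (T : finType) (P : pred T) : count P (enum T) = #|P|.
Proof. by rewrite cardE -size_filter enumT /enum_mem; congr size; apply: eq_filter. Qed.

Lemma char_poly_sim (R : fieldType) m (P A D : 'M[R]_m) :
  P \in unitmx -> P *m A = D *m P -> char_poly A = char_poly D.
Proof.
move=> Pu PA.
have DE : D = P *m A *m invmx P by rewrite PA mulmxK.
have H1 : map_mx (@polyC R) P *m map_mx (@polyC R) (invmx P) = 1%:M by rewrite -map_mxM mulmxV // map_mx1.
have E : char_poly_mx D = map_mx (@polyC R) P *m char_poly_mx A *m map_mx (@polyC R) (invmx P).
  rewrite /char_poly_mx DE !map_mxM mulmxBr mulmxBl scalar_mxC.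
  by rewrite -(mulmxA 'X%:M) H1 mulmx1.
by rewrite /char_poly E !det_mulmx mulrAC -det_mulmx H1 det1 mul1r.
Qed.

Section Core3.
Variable R : realType.
Variable n : nat.
Variables (G M : 'M[R]_n.+1).
Hypothesis Gs : G^T = G.
Hypothesis Ms : M^T = M.
Hypothesis PD : forall x : 'cV_n.+1, x != 0 -> 0 < (x^T *m G *m x) 0 0.
Let A := M *m G.
Variable r : nat.
Variables (lam : 'I_r -> R) (w : 'I_r -> 'cV[R]_n.+1).
Hypothesis lam_nz : forall i, lam i != 0.
Hypothesis w_nz : forall i, w i != 0.
Hypothesis Aw : forall i, A *m w i = lam i *: w i.
Hypothesis charA : char_poly A = 'X^(n.+1 - r) * \prod_(i < r) ('X - (lam i)%:P).
Hypothesis U : forall i (x : 'cV_n.+1), A *m x = lam i *: x -> exists c, x = c *: w i.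

Lemma SA : G *m A = A^T *m G.
Proof. by rewrite /A trmx_mul Gs Ms mulmxA. Qed.

Lemma Gu : G \in unitmx. Proof. exact: PD_unit. Qed.

Let s := nseq (n.+1 - r) (0:R) ++ map lam (enum 'I_r).

Lemma charA_s : char_poly A = \prod_(x <- s) ('X - x%:P).
Proof.
rewrite charA big_cat /= big_nseq big_map big_enum /=.
congr (_ * _).
elim: (n.+1 - r)%N => [|k IH] /=; first by rewrite expr0.
by rewrite -IH exprS polyC0 subr0.
Qed.

Lemma annih : horner_mx A (\prod_(x <- undup s) ('X - x%:P)) = 0.
Proof.
have := @radical R n G A PD SA s 1; rewrite !mul1r; apply.
rewrite -charA_s; exact: Cayley_Hamilton.
Qed.

Lemma diagA : exists2 P : 'M_n.+1, P \in unitmx &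
  exists d : 'rV_n.+1, P *m A = diag_mx d *m P.
Proof.
have [P Pu PA] : (exists2 P : 'M_n.+1, P \in unitmx & diagonalizable_for P A).
  apply/diagonalizableP; exists (undup s); first exact: undup_uniq.
  exact: mxminpoly_min annih.
exists P => //; move/diagonalizable_forPex: PA => [d Hd]; exists d.
exact/(simmxP Pu).
Qed.

Lemma AGinv : A *m invmx G = invmx G *m A^T.
Proof.
have E : invmx G *m (G *m A) *m invmx G = invmx G *m (A^T *m G) *m invmx G.
  by rewrite SA.
move: E; rewrite !mulmxA (mulVmx Gu) mul1mx -!mulmxA (mulmxV Gu) mulmx1.
by rewrite mulmx1.
Qed.

Lemma row_to_w i (y : 'rV_n.+1) : y *m A = lam i *: y ->
  exists c, y = c *: ((w i)^T *m G).
Proof.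
move=> Hy.
have [c Hc] : exists c, invmx G *m y^T = c *: w i.
  apply: U; rewrite mulmxA AGinv -mulmxA -trmx_mul Hy.
  by rewrite linearZ /= scalemxAr.
exists c.
have : y^T = c *: (G *m w i).
  by rewrite scalemxAr -Hc mulmxA (mulmxV Gu) mul1mx.
move/(congr1 trmx); rewrite trmxK => ->.
by rewrite linearZ /= trmx_mul Gs.
Qed.

Lemma n_pos i : 0 < ((w i)^T *m G *m w i) 0 0.
Proof. exact: PD. Qed.

Section WithP.
Variables (P : 'M[R]_n.+1) (d : 'rV[R]_n.+1).
Hypothesis Pu : P \in unitmx.
Hypothesis PA : P *m A = diag_mx d *m P.

Lemma rowP_eig k : row k P *m A = d 0 k *: row k P.
Proof. by rewrite -row_mul PA row_mul row_diag_mx -scalemxAl -rowE. Qed.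

Lemma rowP_nz k : row k P != 0.
Proof.
apply/eqP => H.
have : row k P *m invmx P = 0 by rewrite H mul0mx.
rewrite rowE.
rewrite mulmxK // => /matrixP/(_ 0 k); rewrite !mxE !eqxx /=.
by move/eqP; rewrite oner_eq0.
Qed.

Lemma d_cases k : d 0 k = 0 \/ exists i, d 0 k = lam i.
Proof.
have : eigenvalue A (d 0 k).
  by apply/eigenvalueP; exists (row k P); [exact: rowP_eig | exact: rowP_nz].
rewrite eigenvalue_root_char charA_s root_prod_XsubC mem_cat.
by case/orP => [/nseqP [-> _]|/mapP [i _ ->]]; [left | right; exists i].
Qed.

Lemma lam_inj i j : lam i = lam j -> i = j.
Proof.
move=> Hij; apply/eqP; apply: contraT => nij; exfalso.
have Hperm : perm_eq [seq d 0 k | k <- enum (ordinal n.+1)] s.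
  apply: prod_XsubC_eq; rewrite -charA_s (char_poly_sim Pu PA).
  rewrite char_poly_trig ?diag_mx_is_trig // big_map big_enum /=.
  by apply: eq_bigr => k _; rewrite mxE eqxx mulr1n.
have C1 : (2 <= count (pred1 (lam i)) s)%N.
  rewrite count_cat count_map count_enumT.
  apply: leq_trans (leq_addl _ _).
  have <- : #|[set i; j]| = 2%N by rewrite cards2 nij.
  apply: subset_leq_card; apply/subsetP => x /set2P [->|->]; rewrite inE /=.
    by [].
  by rewrite Hij.
have C2 : leq (count (pred1 (lam i)) [seq d 0 k | k <- enum (ordinal n.+1)]) 1.
  rewrite count_map count_enumT; apply/card_le1_eqP => k l.
  rewrite !inE /= => /eqP Hk /eqP Hl.
  have [a Ha] := row_to_w (etrans (rowP_eig k) (congr1 (fun t => t *: _) Hk)).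
  have [b Hb] := row_to_w (etrans (rowP_eig l) (congr1 (fun t => t *: _) Hl)).
  have a0 : a != 0.
    by apply: contraNneq (rowP_nz k) => a0; rewrite Ha a0 scale0r.
  apply/eqP; apply: contraT => nkl.
  have : ((delta_mx 0 l : 'rV[R]_n.+1) - (b / a) *: delta_mx 0 k) *m P = 0.
    by rewrite mulmxBl -scalemxAl -!rowE Ha Hb scalerA divfK // subrr.
  move/(congr1 (mulmx^~ (invmx P))); rewrite /= mulmxK // mul0mx.
  move/matrixP/(_ 0 l); rewrite !mxE !eqxx (negbTE nkl) /= mulr0 subr0.
  by move/eqP; rewrite oner_eq0.
move/permP: Hperm => /(_ (pred1 (lam i))) Hc.
by move: C1 C2; rewrite Hc => C1 C2; have := leq_trans C1 C2.
Qed.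

Lemma orth i j : i != j -> ((w i)^T *m G *m w j) 0 0 = 0.
Proof.
move=> nij.
have E : (w i)^T *m G *m (A *m w j) = (A *m w i)^T *m G *m w j.
  by rewrite /A !trmx_mul Gs Ms !mulmxA.
move: E; rewrite !Aw linearZ /= [(_ *: w i)^T]linearZ /= -!scalemxAl => /matrixP/(_ 0 0).
rewrite !mxE => /eqP; rewrite -subr_eq0 -mulrBl mulf_eq0 subr_eq0 => /orP[|/eqP //].
move/eqP => E; exfalso; move/negP: nij; apply; apply/eqP; exact: lam_inj.
Qed.

Let Q := \sum_(j < r) (((w j)^T *m G *m w j) 0 0)^-1 *: (w j *m (w j)^T).

Lemma WGQ i : (w i)^T *m G *m Q = (w i)^T.
Proof.
rewrite /Q mulmx_sumr (bigD1 i) //= big1 ?addr0.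
  rewrite -scalemxAr mulmxA (mx11_scalar (_ *m w i)) mul_scalar_mx scalerA [_%:M 0 0]mxE eqxx mulr1n mulVf ?scale1r //.
  exact: lt0r_neq0 (n_pos i).
move=> j nji; rewrite -scalemxAr mulmxA (mx11_scalar ((w i)^T *m G *m w j)).
  have -> : ((w i)^T *m G *m w j) 0 0 = 0 by apply: orth; rewrite eq_sym.
  by rewrite mul_scalar_mx scale0r scaler0.
Qed.

Lemma M_GQ : M = M *m G *m Q.
Proof.
suff H : P *m M = P *m (M *m G *m Q).
  by move/(congr1 (mulmx (invmx P))): H; rewrite !mulKmx.
apply/row_matrixP => k; rewrite !row_mul.
case: (d_cases k) => [Hd|[i Hd]].
  have H0 : row k P *m M *m G = 0 by rewrite -mulmxA rowP_eig Hd scale0r.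
  have H1 : row k P *m M = 0 by rewrite -(mulmxK Gu (row k P *m M)) H0 mul0mx.
  by rewrite !mulmxA H1 !mul0mx.
have [c Hc] := row_to_w (etrans (rowP_eig k) (congr1 (fun t => t *: _) Hd)).
have WGM : (w i)^T *m G *m M = lam i *: (w i)^T.
  by apply: trmx_inj; rewrite !trmx_mul trmxK Gs Ms mulmxA Aw linearZ /= trmxK.
by rewrite Hc -!scalemxAl !mulmxA WGM -!scalemxAl WGQ.
Qed.
End WithP.

Lemma core_main :
  (forall i j, i != j -> ((w i)^T *m G *m w j) 0 0 = 0) /\
  M = M *m G *m \sum_(j < r) (((w j)^T *m G *m w j) 0 0)^-1 *: (w j *m (w j)^T).
Proof.
have [P Pu [d PA]] := diagA.
by split; [move=> i j; apply: (@orth P d Pu PA i j) | apply: (@M_GQ P d Pu PA)].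
Qed.
End Core3.


Section IP.
Variable R : realType.
Variable V : lmodType R.
Variable ip : V -> V -> R.
Hypothesis Hip : inner_product ip.

Lemma ip_sym u v : ip u v = ip v u. Proof. by case: Hip. Qed.
Lemma ipDl u v x : ip (u + v) x = ip u x + ip v x.
Proof. by case: Hip => _ L _ _; have := L 1 u v x; rewrite scale1r mul1r. Qed.
Lemma ip0l x : ip 0 x = 0.
Proof.
have := ipDl 0 0 x; rewrite addr0 => H.
by apply: (@addrI _ (ip 0 x)); rewrite addr0 -H.
Qed.
Lemma ipZl a u x : ip (a *: u) x = a * ip u x.
Proof. by case: Hip => _ L _ _; rewrite -[a *: u]addr0 L ip0l addr0. Qed.
Lemma ipDr u v x : ip x (u + v) = ip x u + ip x v.
Proof. by rewrite !(ip_sym x) ipDl. Qed.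
Lemma ipZr a u x : ip x (a *: u) = a * ip x u.
Proof. by rewrite !(ip_sym x) ipZl. Qed.
Lemma ip0r x : ip x 0 = 0.
Proof. by rewrite ip_sym ip0l. Qed.
Lemma ip_suml k (F : 'I_k -> V) x : ip (\sum_(j < k) F j) x = \sum_(j < k) ip (F j) x.
Proof. exact: (big_morph (fun y => ip y x) (fun a b => ipDl a b x) (ip0l x)). Qed.
Lemma ip_sumr k (F : 'I_k -> V) x : ip x (\sum_(j < k) F j) = \sum_(j < k) ip x (F j).
Proof. exact: (big_morph (fun y => ip x y) (fun a b => ipDr a b x) (ip0r x)). Qed.
Lemma ip_ge0 u : 0 <= ip u u. Proof. by case: Hip. Qed.
Lemma ip_eq0 u : ip u u = 0 -> u = 0. Proof. by case: Hip => _ _ _; apply. Qed.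

Variable X : Type.
Variable phi : X -> V.
Variable m : nat.
Variable xs : 'I_m -> X.

Lemma featmulD a b : featmul phi xs (a + b) = featmul phi xs a + featmul phi xs b.
Proof. by rewrite /featmul -big_split; apply: eq_bigr => j _; rewrite mxE scalerDl. Qed.
Lemma featmulZ c a : featmul phi xs (c *: a) = c *: featmul phi xs a.
Proof. by rewrite /featmul scaler_sumr; apply: eq_bigr => j _; rewrite mxE scalerA. Qed.
Lemma featmul0 : featmul phi xs 0 = 0.
Proof. by rewrite /featmul big1 // => j _; rewrite mxE scale0r. Qed.
Lemma featmulN a : featmul phi xs (- a) = - featmul phi xs a.
Proof. by rewrite -[- a]scaleN1r featmulZ scaleN1r. Qed.
Lemma featmulB a b : featmul phi xs (a - b) = featmul phi xs a - featmul phi xs b.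
Proof. by rewrite featmulD featmulN. Qed.
Lemma featmul_sum k (F : 'I_k -> 'cV_m) :
  featmul phi xs (\sum_(i < k) F i) = \sum_(i < k) featmul phi xs (F i).
Proof. exact: (big_morph _ featmulD featmul0). Qed.

Lemma ip_featmul a h : ip (featmul phi xs a) h = ((a^T *m featT ip phi xs h) 0 0).
Proof.
rewrite /featmul ip_suml mxE; apply: eq_bigr => j _.
by rewrite ipZl !mxE.
Qed.

Lemma featT_featmul a : featT ip phi xs (featmul phi xs a) = gram ip phi xs *m a.
Proof.
apply/matrixP => j z; rewrite !mxE /featmul ip_sumr; apply: eq_bigr => k _.
by rewrite ipZr !mxE [z]ord1 mulrC.
Qed.

Lemma featTZ c h : featT ip phi xs (c *: h) = c *: featT ip phi xs h.
Proof. by apply/matrixP => j z; rewrite !mxE ipZr. Qed.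

Lemma ip_featmul2 a b :
  ip (featmul phi xs a) (featmul phi xs b) = (a^T *m gram ip phi xs *m b) 0 0.
Proof. by rewrite ip_featmul featT_featmul mulmxA. Qed.

Lemma gram_sym : (gram ip phi xs)^T = gram ip phi xs.
Proof. by apply/matrixP => i j; rewrite !mxE ip_sym. Qed.

Hypothesis li : lin_indep phi xs.

Lemma gram_PD (x : 'cV_m) : x != 0 -> 0 < (x^T *m gram ip phi xs *m x) 0 0.
Proof.
move=> xn0; rewrite -ip_featmul2 lt_def ip_ge0 andbT.
by apply: contraNneq xn0 => /ip_eq0 /li ->.
Qed.

End IP.


Lemma core_any (R : realType) m (G M : 'M[R]_m) : G^T = G -> M^T = M ->
  (forall x : 'cV_m, x != 0 -> 0 < (x^T *m G *m x) 0 0) ->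
  forall r (lam : 'I_r -> R) (w : 'I_r -> 'cV_m),
  (forall i, w i != 0) -> (forall i, M *m G *m w i = lam i *: w i) ->
  char_poly (M *m G) = 'X^(m - r) * \prod_(i < r) ('X - (lam i)%:P) ->
  (forall i (x : 'cV_m), M *m G *m x = lam i *: x -> exists c, x = c *: w i) ->
  (forall i j, i != j -> ((w i)^T *m G *m w j) 0 0 = 0) /\
  M = M *m G *m \sum_(j < r) (((w j)^T *m G *m w j) 0 0)^-1 *: (w j *m (w j)^T).
Proof.
case: m G M => [|m'] G M Gs Ms PD r lam w wnz Aw chA U; last exact: core_main.
split => [i j _|]; first by move: (wnz i); rewrite flatmx0 eqxx.
by apply/matrixP => -[].
Qed.

Lemma sq_inv (R : realType) (x : R) : 0 <= x -> (Num.sqrt x)^-1 * (Num.sqrt x)^-1 = x^-1.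
Proof. by move=> x0; rewrite -invfM -expr2 sqr_sqrtr. Qed.

Lemma outer_mul (R : realType) m (w : 'cV[R]_m) (t : 'cV_m) (k : R) :
  (k *: (w *m w^T)) *m t = (k * (w^T *m t) 0 0) *: w.
Proof. by rewrite -scalemxAl -mulmxA {1}(mx11_scalar (w^T *m t)) mul_mx_scalar scalerA. Qed.

Lemma trmxZ' (R : realType) p q (c : R) (A : 'M[R]_(p, q)) : (c *: A)^T = c *: A^T.
Proof. by rewrite linearZ. Qed.

Lemma mxZ (R : realType) p q (c : R) (A : 'M[R]_(p, q)) i j : (c *: A) i j = c * A i j.
Proof. by rewrite mxE. Qed.

Unset Implicit Arguments.
Theorem proposition3p13 (R : realType) (X Y : Type) (H F : lmodType R)
  (ipH : H -> H -> R) (ipF : F -> F -> R) (phi : X -> H) (psi : Y -> F)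
  (m n : nat) (xs : 'I_m -> X) (ys : 'I_n -> Y) (B : 'M[R]_(n, m)) :
  RKHS ipH phi -> RKHS ipF psi ->
  lin_indep phi xs -> lin_indep psi ys ->
  let S := Sop ipH phi psi xs ys B in
  let GPhi := gram ipH phi xs in
  let GPsi := gram ipF psi ys in
  let M := B^T *m GPsi *m B in
  simple_singular_values ipH ipF S ->
  forall (r : nat) (lam : 'I_r -> R) (w : 'I_r -> 'cV[R]_m),
    (forall i, lam i != 0) ->
    char_poly (M *m GPhi) = 'X^(m - r) * \prod_(i < r) ('X - (lam i)%:P) ->
    (forall i, w i != 0 /\ (M *m GPhi) *m w i = lam i *: w i) ->
  let v := fun i => (Num.sqrt (((w i)^T *m GPhi *m w i) 0 0))^-1 *: featmul phi xs (w i) in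
  let u := fun i => (Num.sqrt (lam i))^-1 *: S (v i) in
  is_SVD ipH ipF S (fun i => Num.sqrt (lam i)) u v.
Proof.
move=> RH RF liH liF S GPhi GPsi M simple r lam w lam_nz charA Hw v u.
have ipHi : inner_product ipH by case: RH.
have ipFi : inner_product ipF by case: RF.
have Gs : GPhi^T = GPhi by apply: (gram_sym ipHi).
have GPs : GPsi^T = GPsi by apply: (gram_sym ipFi).
have Ms : M^T = M by rewrite /M !trmx_mul trmxK GPs mulmxA.
have PD : forall x : 'cV_m, x != 0 -> 0 < (x^T *m GPhi *m x) 0 0.
  by move=> x; apply: (gram_PD ipHi liH).
have w_nz i : w i != 0 by case: (Hw i).
have Aw i : M *m GPhi *m w i = lam i *: w i by case: (Hw i).
have S_ip h1 h2 : ipF (S h1) (S h2) =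
    ((featT ipH phi xs h1)^T *m M *m featT ipH phi xs h2) 0 0.
  by rewrite /S /Sop (ip_featmul2 ipFi) trmx_mul /M !mulmxA.
have Mpsd (y : 'cV_m) : 0 <= (y^T *m M *m y) 0 0.
  have -> : y^T *m M *m y = (B *m y)^T *m GPsi *m (B *m y).
    by rewrite /M trmx_mul !mulmxA.
  by rewrite /GPsi -(ip_featmul2 ipFi psi ys); apply: (ip_ge0 ipFi).
have Mdef : M = B^T *m GPsi *m B by [].
clearbody M.
have key i j : ((GPhi *m w i)^T *m M *m (GPhi *m w j)) 0 0 =
    lam j * ((w i)^T *m GPhi *m w j) 0 0.
  have AwR : M *m (GPhi *m w j) = lam j *: w j by rewrite mulmxA Aw.
  by rewrite trmx_mul Gs -(mulmxA _ M) AwR -scalemxAr mxE.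
have nn_pos i : 0 < ((w i)^T *m GPhi *m w i) 0 0 by apply: PD.
have lam_pos i : 0 < lam i.
  have := Mpsd (GPhi *m w i); rewrite key pmulr_lge0 // => l0.
  by rewrite lt_def lam_nz.
have U i (x : 'cV_m) : M *m GPhi *m x = lam i *: x -> exists c, x = c *: w i.
  move=> Ax.
  have eig y : M *m GPhi *m y = lam i *: y ->
      eigen_SstarS ipH ipF S (Num.sqrt (lam i) ^+ 2) (featmul phi xs y).
    move=> Ay h; rewrite sqr_sqrtr ?ltW // S_ip (featT_featmul ipHi) (ip_featmul ipHi).
    have -> : (GPhi *m y)^T *m M = (M *m GPhi *m y)^T by rewrite !trmx_mul Gs Ms mulmxA.
    by rewrite Ay linearZ /= -scalemxAl mxE.
  have fw : featmul phi xs (w i) != 0.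
    by apply: (contraNneq _ (w_nz i)) => /liH ->.
  have sp : 0 < Num.sqrt (lam i) by rewrite sqrtr_gt0.
  have [c Hc] := simple (Num.sqrt (lam i)) sp _ _ (eig _ (Aw i)) (eig _ Ax) fw.
  exists c; apply/eqP; rewrite -subr_eq0; apply/eqP; apply: liH.
  by rewrite featmulB featmulZ Hc subrr.
have [orth MGQ] := core_any Gs Ms PD w_nz Aw charA U.
split.
- by move=> i; rewrite sqrtr_gt0.
- move=> i j; rewrite /u (ipZl ipFi) (ipZr ipFi) S_ip /v !(featTZ ipHi) !(featT_featmul ipHi).
  rewrite trmxZ' -!scalemxAl -scalemxAr !mxZ -/GPhi key.
  case: (eqVneq i j) => [<-|nij].
    have n0 := lt0r_neq0 (nn_pos i).
    rewrite !mulrA (sq_inv (ltW (lam_pos i))) -(mulrA _ (_^-1) (_^-1)).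
    rewrite (sq_inv (ltW (nn_pos i))).
    rewrite [true%:R]/= mulr1n. by field; rewrite lam_nz n0.
  by rewrite (orth i j nij) !mulr0.
- move=> i j; rewrite /v (ipZl ipHi) (ipZr ipHi) (ip_featmul2 ipHi).
  case: (eqVneq i j) => [<-|nij].
    rewrite mulrA (sq_inv (ltW (nn_pos i))) mulVf //.
    exact: lt0r_neq0 (nn_pos i).
  by rewrite (orth i j nij) !mulr0.
- move=> h; set t := featT ipH phi xs h.
  pose Q := \sum_(j < r) (((w j)^T *m GPhi *m w j) 0 0)^-1 *: (w j *m (w j)^T).
  rewrite -/Q in MGQ.
  have My : M *m (t - GPhi *m (Q *m t)) = 0 by rewrite mulmxBr !mulmxA -MGQ subrr.
  have Bt : B *m t = B *m (GPhi *m (Q *m t)).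
    have : featmul psi ys (B *m (t - GPhi *m (Q *m t))) = 0.
      apply: (ip_eq0 ipFi); rewrite (ip_featmul2 ipFi) -/GPsi.
      have -> : (B *m (t - GPhi *m (Q *m t)))^T *m GPsi *m (B *m (t - GPhi *m (Q *m t)))
          = (t - GPhi *m (Q *m t))^T *m (M *m (t - GPhi *m (Q *m t))).
        by rewrite Mdef trmx_mul !mulmxA.
      by rewrite My mulmx0 mxE.
    by move/liF/eqP; rewrite mulmxBr subr_eq0 => /eqP.
  rewrite /S /Sop -/t Bt /Q mulmx_suml mulmx_sumr mulmx_sumr featmul_sum.
  apply: eq_bigr => j _.
  rewrite outer_mul /tensor /u /v (ipZl ipHi) (ip_featmul ipHi) -/t /S /Sop.
  rewrite (featTZ ipHi) (featT_featmul ipHi) -/GPhi.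
  rewrite -!featmulZ; congr featmul.
  rewrite -!scalemxAr !scalerA; congr (_ *: _).
  have s0 : Num.sqrt (lam j) != 0.
    by apply: lt0r_neq0; rewrite sqrtr_gt0.
  have c0 : Num.sqrt (((w j)^T *m GPhi *m w j) 0 0) != 0.
    by apply: lt0r_neq0; rewrite sqrtr_gt0.
  rewrite -(sq_inv (ltW (nn_pos j))).
  by field; rewrite s0 c0.
Qed.
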